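(* Let $L$ be an oriented link in $S^3$ equipped with its $0$-framing, and let $p(L)$ denote the same framed link with the orientation forgotten. Then $$\sum_{L'\in OR(p(L))} (-1)^{\mathrm{com}(L')}a^{fr(L')} \;=\; (-1)^{\mathrm{com}(L)}\sum_{S\subset L} a^{-4\,\mathrm{lk}(S,L-S)},$$ where the right-hand sum runs over all sublinks $S$ of $L$ (unions of components, including $S=\emptyset$ and $S=L$), and $\mathrm{lk}(S,L-S)$ is the total linking number between $S$ and its complementary sublink $L-S$ (with orientations inherited from $L$).
   Context: For an unoriented framed link $P$, $OR(P)$ is the set of all oriented framed links obtained by choosing an orientation of each component of $P$ while keeping the framing. $\mathrm{com}(L')$ is the number of components. For an oriented framed link $L'$, $fr(L')$ is the number of right-hand full twists that must be removed from the framing of $L'$ to reach the $0$-framing (the framing induced by a Seifert surface of the oriented link $L'$); equivalently $fr(L')=\mathrm{lk}(L',L'')$ with $L''$ the push-off of $L'$ along its framing, oriented parallel to $L'$. The $0$-framing of the oriented link $L$ is the one with $fr(L)=0$. *)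

(* Defs.v *)
From HB Require Import structures.
From mathcomp Require Import all_boot all_order all_algebra.
Set Implicit Arguments. Unset Strict Implicit. Unset Printing Implicit Defensive.
Import Order.TTheory GRing.Theory Num.Theory.
Local Open Scope ring_scope.

(* An oriented framed link with n components K_0,...,K_{n-1} in S^3, recorded
   through the data on which all quantities of the statement depend:
   - lk i j  (i <> j) : the linking number lk(K_i, K_j) of the oriented components
                        (symmetric); the diagonal is irrelevant/unused;
   - framing i        : lk(K_i, K_i'') where K_i'' is the push-off of K_i along
                        its framing, oriented parallel to K_i. *)
Record FLink (n : nat) := FLinkMk {
  lk : 'I_n -> 'I_n -> int ;
  framing : 'I_n -> int ;
  lk_sym : forall i j, lk i j = lk j i }.

Definition com n (L : FLink n) : nat := n.

(* Reorienting: component i is reversed iff e i = true.  Linking numbers of two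
   distinct components change sign for each reversal; the framing of a component
   (the component and its parallel push-off are reversed together) is unchanged. *)
Definition reorient_lk n (L : FLink n) (e : {ffun 'I_n -> bool}) i j : int :=
  (-1) ^+ (e i + e j) * lk L i j.

Lemma reorient_lk_sym n (L : FLink n) e i j :
  reorient_lk L e i j = reorient_lk L e j i.
Proof. by rewrite /reorient_lk addnC lk_sym. Qed.

Definition reorient n (L : FLink n) (e : {ffun 'I_n -> bool}) : FLink n :=
  @FLinkMk n (reorient_lk L e) (framing L) (reorient_lk_sym L e).

(* OR(p(L)) : all oriented framed links obtained from the underlying unoriented
   framed link of L by choosing orientations of the components (one for each of
   the 2^n choices). *)
Definition OR n (L : FLink n) : seq (FLink n) :=
  [seq reorient L e | e <- enum {ffun 'I_n -> bool}].

(* fr(L) = lk(L, L''), L'' the push-off of L along its framing, oriented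
   parallel to L; by bilinearity this is the sum over pairs of components. *)
Definition fr n (L : FLink n) : int :=
  \sum_(i < n) \sum_(j < n) (if i == j then framing L i else lk L i j).

Definition lk_sub n (L : FLink n) (S : {set 'I_n}) : int :=
  \sum_(i in S) \sum_(j in ~: S) lk L i j.

(* Main.v *)
Require Import Defs.
From HB Require Import structures.
From mathcomp Require Import all_boot all_order all_algebra.
From mathcomp Require Import ring.
Import Order.TTheory GRing.Theory Num.Theory.
Local Open Scope ring_scope.

Lemma fr_reorient n (L : FLink n) (e : {ffun 'I_n -> bool}) :
  fr L = 0 -> fr (reorient L e) = -4 * lk_sub L [set i | e i].
Proof.
move=> h0.
set S := [set i | e i].
pose d i j : int := if e i != e j then lk L i j else 0.
have h1 : fr (reorient L e) - fr L = - (2 * \sum_i \sum_j d i j).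
  rewrite /fr -sumrB -mulNr mulr_sumr; apply: eq_bigr => i _.
  rewrite -sumrB mulr_sumr; apply: eq_bigr => j _.
  rewrite /d /reorient /= /reorient_lk.
  case: eqP => [->|_]; first by rewrite eqxx mulr0 subrr.
  by case: (e i); case: (e j) => /=; rewrite ?expr0 ?expr1 ?mulr0; ring.
have h2 : \sum_i \sum_j d i j = 2 * lk_sub L S.
  rewrite (bigID (fun i => i \in S)) /=.
  have ->: \sum_(i | i \in S) \sum_j d i j = lk_sub L S.
    rewrite /lk_sub; apply: eq_bigr => i iS.
    rewrite [RHS]big_mkcond; apply: eq_bigr => j _.
    move: iS; rewrite /d !inE => ->.
    by case: (e j).
  have ->: \sum_(i | i \notin S) \sum_j d i j = lk_sub L S.
    rewrite /lk_sub exchange_big /= [RHS]big_mkcond /=.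
    apply: eq_bigr => j _.
    case jS: (j \in S).
      apply: eq_big => [i|i iS]; first by rewrite in_setC.
      by rewrite /d; move: iS jS; rewrite !inE => /negbTE -> ->; rewrite lk_sym.
    apply: big1 => i; rewrite /d => iS.
    by move: iS jS; rewrite !inE => /negbTE -> ->.
  by rewrite mulr2n mulrDl mul1r.
have ->: fr (reorient L e) = fr L + (fr (reorient L e) - fr L) by ring.
by rewrite h1 h2 h0; ring.
Qed.

Theorem lemma4 (R : fieldType) (a : R) (n : nat) (L : FLink n) :
  a != 0 -> fr L = 0 ->
  \sum_(L' <- OR L) (-1) ^+ (com L') * a ^ (fr L') =
  (-1) ^+ (com L) * \sum_(S : {set 'I_n}) a ^ (-4 * lk_sub L S).
Proof.
move=> _ h0.
rewrite /OR big_map big_enum /= mulr_sumr.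
rewrite (reindex (fun e : {ffun 'I_n -> bool} => [set i | e i])) /=.
  by apply: eq_bigr => e _; rewrite fr_reorient.
exists (fun S : {set 'I_n} => [ffun i => i \in S]) => x _.
  by apply/ffunP => i; rewrite ffunE inE.
by apply/setP => i; rewrite inE ffunE.
Qed.
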